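(* The Segre variety $S_3(3)$ has exactly $3424$ geometric hyperplanes. Exactly $3280$ of them are projective, and the remaining $144$ are non-projective, each of the latter being an ovoid. More precisely, the numbers of geometric hyperplanes with $37$, $28$, $22$, $19$ and $16$ points are respectively $64$, $288$, $1728$, $768$ and $576$; the $64$ with $37$ points are the singular hyperplanes, the $576$ with $16$ points are the ovoids, and exactly $432$ of the ovoids are projective.
   Context: Let $L=\mathrm{PG}(1,3)$, a set of $4$ points. The Segre variety $S_3(3)$ is the point-line incidence structure with point set $L^3$ ($64$ points) whose lines are the $4$-element sets obtained by fixing two coordinates and letting the third run over $L$. A geometric hyperplane is a proper subset $H$ of points such that every line is contained in $H$ or meets $H$ in exactly one point. A singular hyperplane with nucleus $p$ is the set of points agreeing with $p$ in at least one coordinate; an ovoid is a geometric hyperplane containing no line. With $V=\mathrm{GF}(3)^2$, the Segre embedding sends $([x_1],[x_2],[x_3])$ to $[x_1\otimes x_2\otimes x_3]\in\mathrm{PG}(7,3)=\mathbb{P}(V^{\otimes 3})$; a geometric hyperplane is projective if it is the set of points whose images lie in some hyperplane of $\mathrm{PG}(7,3)$. *)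

(* Defs.v *)
From HB Require Import structures.
From mathcomp Require Import all_boot all_order all_algebra.
Set Implicit Arguments. Unset Strict Implicit. Unset Printing Implicit Defensive.
Import GRing.Theory.
Local Open Scope ring_scope.

Notation F3 := 'F_3.

(* A nonzero vector of GF(3)^2 (as a pair) is a normalized representative of a
   point of PG(1,3) if its first nonzero coordinate equals 1. *)
Definition normalized (v : F3 * F3) : bool :=
  (v.1 == 1) || ((v.1 == 0) && (v.2 == 1)).

Definition PL := {v : F3 * F3 | normalized v}.

Definition rep (x : PL) (k : 'I_2) : F3 :=
  if k == ord0 then (val x).1 else (val x).2.

Definition SPoint := {ffun 'I_3 -> PL}.

Definition sline (p : SPoint) (i : 'I_3) : {set SPoint} :=
  [set q : SPoint | [forall j : 'I_3, (j != i) ==> (q j == p j)]].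

Definition slines : {set {set SPoint}} :=
  [set sline p i | p : SPoint, i : 'I_3].

Definition geom_hyperplane (H : {set SPoint}) : bool :=
  (H != [set: SPoint]) &&
  [forall l in slines, (l \subset H) || (#|l :&: H| == 1)%N].

Definition singular_hyp (p : SPoint) : {set SPoint} :=
  [set q : SPoint | [exists j : 'I_3, q j == p j]].

Definition ovoid (H : {set SPoint}) : bool :=
  geom_hyperplane H && [forall l in slines, ~~ (l \subset H)].

(* Standard basis of V^{(x)3}, V = GF(3)^2: indexed by e : 'I_3 -> 'I_2,
   basis vector e_{e 0} (x) e_{e 1} (x) e_{e 2}. A linear functional on
   V^{(x)3} is a coefficient vector c; its value on the Segre image
   x_0 (x) x_1 (x) x_2 of a point x is computed below. *)
Definition TIdx := {ffun 'I_3 -> 'I_2}.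

Definition segre_eval (c : {ffun TIdx -> F3}) (x : SPoint) : F3 :=
  \sum_(e : TIdx) c e * \prod_(j : 'I_3) rep (x j) (e j).

(* projective: H is the set of points whose Segre image lies in a hyperplane
   of PG(7,3), i.e. in the kernel of a nonzero linear functional. *)
Definition projective (H : {set SPoint}) : bool :=
  [exists c : {ffun TIdx -> F3},
     (c != 0) && (H == [set x : SPoint | segre_eval c x == 0])].

Definition ghyps : {set {set SPoint}} := [set H | geom_hyperplane H].

(* Main.v *)
Require Import Defs.
From HB Require Import structures.
From mathcomp Require Import all_boot all_order all_algebra.
From mathcomp Require Import zify.
Import GRing.Theory.


Definition digit (n j : nat) : nat :=
  if j == 0 then n %/ 16 %% 4 else if j == 1 then n %/ 4 %% 4 else n %% 4.
Definition setdigit (m i k : nat) : nat :=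
  if i == 0 then k * 16 + m %% 16
  else if i == 1 then (m %/ 16) * 16 + k * 4 + m %% 4
  else (m %/ 4) * 4 + k.
Definition lineidx (m i : nat) : seq nat := [seq setdigit m i k | k <- iota 0 4].
Definition offs (m i : nat) : seq nat := [seq m - j | j <- lineidx m i & j <= m].
Definition TB : seq (seq (seq nat)) :=
  [:: [:: [:: 0]; [:: 0]; [:: 0]]; [:: [:: 0]; [:: 0]; [:: 1; 0]]; [:: [:: 0]; [:: 0]; [:: 2; 1; 0]]; [:: [:: 0]; [:: 0]; [:: 3; 2; 1; 0]]; [:: [:: 0]; [:: 4; 0]; [:: 0]]; [:: [:: 0]; [:: 4; 0]; [:: 1; 0]]; [:: [:: 0]; [:: 4; 0]; [:: 2; 1; 0]]; [:: [:: 0]; [:: 4; 0]; [:: 3; 2; 1; 0]]; [:: [:: 0]; [:: 8; 4; 0]; [:: 0]]; [:: [:: 0]; [:: 8; 4; 0]; [:: 1; 0]]; [:: [:: 0]; [:: 8; 4; 0]; [:: 2; 1; 0]]; [:: [:: 0]; [:: 8; 4; 0]; [:: 3; 2; 1; 0]]; [:: [:: 0]; [:: 12; 8; 4; 0]; [:: 0]]; [:: [:: 0]; [:: 12; 8; 4; 0]; [:: 1; 0]]; [:: [:: 0]; [:: 12; 8; 4; 0]; [:: 2; 1; 0]]; [:: [:: 0]; [:: 12; 8; 4; 0]; [:: 3; 2; 1; 0]]; [:: [:: 16; 0]; [:: 0]; [:: 0]]; [:: [:: 16; 0]; [:: 0]; [:: 1; 0]]; [:: [:: 16; 0]; [:: 0];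 [:: 2; 1; 0]]; [:: [:: 16; 0]; [:: 0]; [:: 3; 2; 1; 0]]; [:: [:: 16; 0]; [:: 4; 0]; [:: 0]]; [:: [:: 16; 0]; [:: 4; 0]; [:: 1; 0]]; [:: [:: 16; 0]; [:: 4; 0]; [:: 2; 1; 0]]; [:: [:: 16; 0]; [:: 4; 0]; [:: 3; 2; 1; 0]]; [:: [:: 16; 0]; [:: 8; 4; 0]; [:: 0]]; [:: [:: 16; 0]; [:: 8; 4; 0]; [:: 1; 0]]; [:: [:: 16; 0]; [:: 8; 4; 0]; [:: 2; 1; 0]]; [:: [:: 16; 0]; [:: 8; 4; 0]; [:: 3; 2; 1; 0]]; [:: [:: 16; 0]; [:: 12; 8; 4; 0]; [:: 0]]; [:: [:: 16; 0]; [:: 12; 8; 4; 0]; [:: 1; 0]]; [:: [:: 16; 0]; [:: 12; 8; 4; 0]; [:: 2; 1; 0]]; [:: [:: 16; 0]; [:: 12; 8; 4; 0]; [:: 3; 2; 1; 0]]; [:: [:: 32; 16; 0]; [:: 0]; [:: 0]]; [:: [:: 32; 16; 0]; [:: 0]; [:: 1; 0]]; [:: [:: 32; 16; 0]; [:: 0]; [:: 2; 1; 0]]; [:: [:: 32; 16; 0]; [:: 0]; [:: 3; 2; 1; 0]]; [:: [:: 32; 16; 0]; [:: 4; 0]; [:: 0]]; [:: [:: 32; 16; 0]; [:: 4; 0]; [:: 1; 0]]; [:: [:: 32; 16; 0]; [:: 4; 0]; [:: 2; 1; 0]]; [:: [:: 32; 16; 0]; [:: 4; 0]; [:: 3; 2;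 1; 0]]; [:: [:: 32; 16; 0]; [:: 8; 4; 0]; [:: 0]]; [:: [:: 32; 16; 0]; [:: 8; 4; 0]; [:: 1; 0]]; [:: [:: 32; 16; 0]; [:: 8; 4; 0]; [:: 2; 1; 0]]; [:: [:: 32; 16; 0]; [:: 8; 4; 0]; [:: 3; 2; 1; 0]]; [:: [:: 32; 16; 0]; [:: 12; 8; 4; 0]; [:: 0]]; [:: [:: 32; 16; 0]; [:: 12; 8; 4; 0]; [:: 1; 0]]; [:: [:: 32; 16; 0]; [:: 12; 8; 4; 0]; [:: 2; 1; 0]]; [:: [:: 32; 16; 0]; [:: 12; 8; 4; 0]; [:: 3; 2; 1; 0]]; [:: [:: 48; 32; 16; 0]; [:: 0]; [:: 0]]; [:: [:: 48; 32; 16; 0]; [:: 0]; [:: 1; 0]]; [:: [:: 48; 32; 16; 0]; [:: 0]; [:: 2; 1; 0]]; [:: [:: 48; 32; 16; 0]; [:: 0]; [:: 3; 2; 1; 0]]; [:: [:: 48; 32; 16; 0]; [:: 4; 0]; [:: 0]]; [:: [:: 48; 32; 16; 0]; [:: 4; 0]; [:: 1; 0]]; [:: [:: 48; 32; 16; 0]; [:: 4; 0]; [:: 2; 1; 0]]; [:: [:: 48; 32; 16; 0]; [:: 4; 0]; [:: 3; 2; 1; 0]]; [:: [:: 48; 32; 16; 0]; [:: 8; 4; 0]; [:: 0]]; [:: [:: 48; 32; 16; 0]; [:: 8; 4; 0]; [:: 1; 0]]; [:: [:: 48; 32; 16; 0]; [:: 8; 4; 0]; [:: 2; 1; 0]];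 [:: [:: 48; 32; 16; 0]; [:: 8; 4; 0]; [:: 3; 2; 1; 0]]; [:: [:: 48; 32; 16; 0]; [:: 12; 8; 4; 0]; [:: 0]]; [:: [:: 48; 32; 16; 0]; [:: 12; 8; 4; 0]; [:: 1; 0]]; [:: [:: 48; 32; 16; 0]; [:: 12; 8; 4; 0]; [:: 2; 1; 0]]; [:: [:: 48; 32; 16; 0]; [:: 12; 8; 4; 0]; [:: 3; 2; 1; 0]]].
Lemma TB_eq : TB = [seq [seq offs m i | i <- iota 0 3] | m <- iota 0 64].
Proof. vm_compute. reflexivity. Qed.
Definition badv (v : seq bool) : bool :=
  ((1 < count id v) && ~~ all id v) || ((size v == 4) && (count id v == 0)).
Definition okr (m : nat) (r : seq bool) : bool :=
  all (fun os => ~~ badv [seq nth false r o | o <- os]) (nth [::] TB m).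
Fixpoint srch (f m : nat) (r : seq bool) : seq (seq bool) :=
  match f with
  | 0 => [:: r]
  | f'.+1 =>
    let r0 := false :: r in let r1 := true :: r in
    (if okr m r0 then srch f' m.+1 r0 else [::]) ++
    (if okr m r1 then srch f' m.+1 r1 else [::])
  end.
Definition lineok (b : seq bool) (q : seq nat) : bool :=
  let c := count (nth false b) q in (c == 4) || (c == 1).
Definition LIall : seq (seq nat) :=
  [:: [:: 0; 16; 32; 48]; [:: 0; 4; 8; 12]; [:: 0; 1; 2; 3]; [:: 1; 17; 33; 49]; [:: 1; 5; 9; 13]; [:: 0; 1; 2; 3]; [:: 2; 18; 34; 50]; [:: 2; 6; 10; 14]; [:: 0; 1; 2; 3]; [:: 3; 19; 35; 51]; [:: 3; 7; 11; 15]; [:: 0; 1; 2; 3]; [:: 4; 20; 36; 52]; [:: 0; 4; 8; 12]; [:: 4; 5; 6; 7]; [:: 5; 21; 37; 53]; [:: 1; 5; 9; 13]; [:: 4; 5; 6; 7]; [:: 6; 22; 38; 54]; [:: 2; 6; 10; 14]; [:: 4; 5; 6; 7]; [:: 7; 23; 39; 55]; [:: 3; 7; 11; 15]; [:: 4; 5; 6; 7]; [:: 8; 24; 40; 56]; [:: 0; 4; 8; 12]; [:: 8; 9; 10; 11]; [:: 9; 25; 41; 57]; [:: 1; 5; 9; 13]; [:: 8; 9; 10; 11]; [:: 10; 26; 42; 58]; [:: 2; 6; 10; 14]; [:: 8; 9; 10; 11]; [:: 11; 27; 43; 59]; [:: 3; 7; 11; 15]; [:: 8; 9; 10; 11]; [::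 12; 28; 44; 60]; [:: 0; 4; 8; 12]; [:: 12; 13; 14; 15]; [:: 13; 29; 45; 61]; [:: 1; 5; 9; 13]; [:: 12; 13; 14; 15]; [:: 14; 30; 46; 62]; [:: 2; 6; 10; 14]; [:: 12; 13; 14; 15]; [:: 15; 31; 47; 63]; [:: 3; 7; 11; 15]; [:: 12; 13; 14; 15]; [:: 0; 16; 32; 48]; [:: 16; 20; 24; 28]; [:: 16; 17; 18; 19]; [:: 1; 17; 33; 49]; [:: 17; 21; 25; 29]; [:: 16; 17; 18; 19]; [:: 2; 18; 34; 50]; [:: 18; 22; 26; 30]; [:: 16; 17; 18; 19]; [:: 3; 19; 35; 51]; [:: 19; 23; 27; 31]; [:: 16; 17; 18; 19]; [:: 4; 20; 36; 52]; [:: 16; 20; 24; 28]; [:: 20; 21; 22; 23]; [:: 5; 21; 37; 53]; [:: 17; 21; 25; 29]; [:: 20; 21; 22; 23]; [:: 6; 22; 38; 54]; [:: 18; 22; 26; 30]; [:: 20; 21; 22; 23]; [:: 7; 23; 39; 55]; [:: 19; 23; 27; 31]; [:: 20; 21; 22; 23]; [:: 8; 24; 40; 56]; [:: 16; 20; 24; 28]; [:: 24; 25; 26; 27]; [:: 9; 25; 41; 57]; [:: 17; 21; 25; 29]; [:: 24; 25; 26; 27]; [:: 10; 26; 42; 58]; [:: 18; 22; 26; 30]; [:: 24; 25; 26; 27]; [:: 11; 27; 43; 59]; [:: 19; 23; 27; 31]; [:: 24; 25; 26; 27]; [:: 12; 28; 44; 60]; [:: 16; 20; 24; 28]; [:: 28;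 29; 30; 31]; [:: 13; 29; 45; 61]; [:: 17; 21; 25; 29]; [:: 28; 29; 30; 31]; [:: 14; 30; 46; 62]; [:: 18; 22; 26; 30]; [:: 28; 29; 30; 31]; [:: 15; 31; 47; 63]; [:: 19; 23; 27; 31]; [:: 28; 29; 30; 31]; [:: 0; 16; 32; 48]; [:: 32; 36; 40; 44]; [:: 32; 33; 34; 35]; [:: 1; 17; 33; 49]; [:: 33; 37; 41; 45]; [:: 32; 33; 34; 35]; [:: 2; 18; 34; 50]; [:: 34; 38; 42; 46]; [:: 32; 33; 34; 35]; [:: 3; 19; 35; 51]; [:: 35; 39; 43; 47]; [:: 32; 33; 34; 35]; [:: 4; 20; 36; 52]; [:: 32; 36; 40; 44]; [:: 36; 37; 38; 39]; [:: 5; 21; 37; 53]; [:: 33; 37; 41; 45]; [:: 36; 37; 38; 39]; [:: 6; 22; 38; 54]; [:: 34; 38; 42; 46]; [:: 36; 37; 38; 39]; [:: 7; 23; 39; 55]; [:: 35; 39; 43; 47]; [:: 36; 37; 38; 39]; [:: 8; 24; 40; 56]; [:: 32; 36; 40; 44]; [:: 40; 41; 42; 43]; [:: 9; 25; 41; 57]; [:: 33; 37; 41; 45]; [:: 40; 41; 42; 43]; [:: 10; 26; 42; 58]; [:: 34; 38; 42; 46]; [:: 40; 41; 42; 43]; [:: 11; 27; 43; 59]; [:: 35; 39; 43; 47]; [:: 40; 41; 42; 43]; [:: 12; 28; 44; 60]; [:: 32; 36; 40; 44]; [:: 44; 45; 46; 47]; [:: 13; 29; 45; 61]; [:: 33;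 37; 41; 45]; [:: 44; 45; 46; 47]; [:: 14; 30; 46; 62]; [:: 34; 38; 42; 46]; [:: 44; 45; 46; 47]; [:: 15; 31; 47; 63]; [:: 35; 39; 43; 47]; [:: 44; 45; 46; 47]; [:: 0; 16; 32; 48]; [:: 48; 52; 56; 60]; [:: 48; 49; 50; 51]; [:: 1; 17; 33; 49]; [:: 49; 53; 57; 61]; [:: 48; 49; 50; 51]; [:: 2; 18; 34; 50]; [:: 50; 54; 58; 62]; [:: 48; 49; 50; 51]; [:: 3; 19; 35; 51]; [:: 51; 55; 59; 63]; [:: 48; 49; 50; 51]; [:: 4; 20; 36; 52]; [:: 48; 52; 56; 60]; [:: 52; 53; 54; 55]; [:: 5; 21; 37; 53]; [:: 49; 53; 57; 61]; [:: 52; 53; 54; 55]; [:: 6; 22; 38; 54]; [:: 50; 54; 58; 62]; [:: 52; 53; 54; 55]; [:: 7; 23; 39; 55]; [:: 51; 55; 59; 63]; [:: 52; 53; 54; 55]; [:: 8; 24; 40; 56]; [:: 48; 52; 56; 60]; [:: 56; 57; 58; 59]; [:: 9; 25; 41; 57]; [:: 49; 53; 57; 61]; [:: 56; 57; 58; 59]; [:: 10; 26; 42; 58]; [:: 50; 54; 58; 62]; [:: 56; 57; 58; 59]; [:: 11; 27; 43; 59]; [:: 51; 55; 59; 63]; [:: 56; 57; 58; 59]; [:: 12; 28; 44; 60]; [:: 48; 52; 56; 60]; [:: 60; 61; 62; 63]; [:: 13; 29; 45; 61]; [:: 49; 53; 57; 61]; [:: 60; 61; 62; 63]; [:: 14;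 30; 46; 62]; [:: 50; 54; 58; 62]; [:: 60; 61; 62; 63]; [:: 15; 31; 47; 63]; [:: 51; 55; 59; 63]; [:: 60; 61; 62; 63]].
Lemma LIall_eq : LIall = [seq lineidx m i | m <- iota 0 64, i <- iota 0 3].
Proof. vm_compute. reflexivity. Qed.
Definition ghb (b : seq bool) : bool := ~~ all id b && all (lineok b) LIall.
Definition ovb (b : seq bool) : bool :=
  ghb b && all (fun q => count (nth false b) q != 4) LIall.
Notation SEARCH := [seq b <- [seq rev r | r <- srch 64 0 [::]] | ghb b].

Lemma all_allpairs (T1 T2 T : Type) (P : pred T) (f : T1 -> T2 -> T) s t :
  all P [seq f x y | x <- s, y <- t] = all (fun x => all (fun y => P (f x y)) t) s.
Proof. by elim: s => //= x s IH; rewrite all_cat all_map IH. Qed.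

Lemma size_lineidx m i : size (lineidx m i) = 4.
Proof. by rewrite size_map size_iota. Qed.

Lemma lineidx_in m i : m < 64 -> i < 3 -> lineidx m i \in LIall.
Proof.
move=> hm hi; rewrite LIall_eq; apply/allpairsP; exists (m, i); split => //; by rewrite mem_iota add0n /= ?hm ?hi.
Qed.

Lemma okr_take b m : size b = 64 -> all (lineok b) LIall -> m < 64 ->
  okr m (rev (take m.+1 b)).
Proof.
move=> sb gb hm; rewrite /okr TB_eq (nth_map 0) ?size_iota // nth_iota // add0n.
rewrite all_map; apply/allP => i; rewrite mem_iota add0n => /andP [_ hi] /=.
set q := lineidx m i.
have hq : lineok b q by apply: (allP gb); apply: lineidx_in.
have sq : size q = 4 by apply: size_lineidx.
rewrite /offs -map_comp -/q.
rewrite (_ : map _ [seq j <- q | j <= m] = map (nth false b) [seq j <- q | j <= m]); last first.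
  apply/eq_in_map => j; rewrite mem_filter => /andP [hj _] /=.
  have st : size (take m.+1 b) = m.+1 by rewrite size_takel // sb.
  rewrite nth_rev st; last by lia.
  have -> : m.+1 - (m - j).+1 = j by lia.
  by rewrite nth_take //; lia.
clearbody q.
rewrite /badv count_map all_map size_map size_filter.
move: hq; rewrite /lineok => /orP [] /eqP hc.
- have ha : all (nth false b) q by rewrite all_count hc sq.
  have haF : all (preim (nth false b) id) [seq j <- q | j <= m].
    rewrite all_filter; apply: sub_all ha => j hj; apply/implyP => _; exact: hj.
  rewrite haF andbF /=.
  have hF : count (preim (nth false b) id) [seq j <- q | j <= m] = count (fun j => j <= m) q.
    by have /all_filterP e := haF; rewrite -size_filter e size_filter.
  rewrite hF. by case: eqP => // ->.
- have le1 : count (preim (nth false b) id) [seq j <- q | j <= m] <= 1.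
    by rewrite -hc count_filter; apply: sub_count => j /andP [].
  rewrite ltnNge le1 /=.
  apply/negP => /andP [/eqP h4].
  have hall : all (fun j => j <= m) q by rewrite all_count h4 sq.
  move/all_filterP: hall => ->. by rewrite hc.
Qed.


Lemma srch_complete b : size b = 64 -> all (lineok b) LIall ->
  forall f m, m + f = 64 -> rev b \in srch f m (rev (take m b)).
Proof.
move=> sb gb; elim=> [|f IH] m hmf /=.
  by rewrite addn0 in hmf; rewrite take_oversize ?sb ?hmf // mem_seq1.
have hm : m < 64 by lia.
have ht : take m.+1 b = rcons (take m b) (nth false b m) by rewrite (take_nth false) // sb.
have hok := @okr_take b m sb gb hm.
have IH' := IH m.+1 (ltac:(lia)).
rewrite ht rev_rcons in hok IH'.
rewrite mem_cat; case: (nth false b m) hok IH' => hok IH'.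
  by rewrite hok IH' orbT.
by rewrite hok IH'.
Qed.

Lemma srch_shape f m r x : x \in srch f m r -> exists s, size s = f /\ x = s ++ r.
Proof.
elim: f m r => [|f IH] m r /=.
  by rewrite mem_seq1 => /eqP ->; exists [::].
rewrite mem_cat => /orP [] h.
  case: ifP h => // _ /IH [s [ss ->]]; exists (rcons s false); split.
    by rewrite size_rcons ss.
  by rewrite cat_rcons.
case: ifP h => // _ /IH [s [ss ->]]; exists (rcons s true); split.
  by rewrite size_rcons ss.
by rewrite cat_rcons.
Qed.

Lemma srch_uniq f m r : uniq (srch f m r).
Proof.
elim: f m r => [|f IH] m r //=.
rewrite cat_uniq; apply/and3P; split.
- by case: ifP.
- apply/hasP => -[x]; case: ifP => // _ /srch_shape [s [ss ->]].
  case: ifP => // _ /srch_shape [s' [ss' e]].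
  move/eqP: e; rewrite eqseq_cat; last by rewrite ss ss'.
  by case/andP.
- by case: ifP.
Qed.

Lemma SEARCH_uniq : uniq SEARCH.
Proof.
apply: filter_uniq; rewrite map_inj_uniq; first exact: srch_uniq.
exact: (can_inj (@revK _)).
Qed.

Lemma SEARCH_size : all (fun b => size b == 64) SEARCH.
Proof.
apply/allP => b; rewrite mem_filter => /andP [_ /mapP [r hr ->]].
by have [s [ss ->]] := @srch_shape 64 0 [::] r hr; rewrite size_rev cats0 ss.
Qed.

Lemma inSEARCH b : size b = 64 -> (b \in SEARCH) = ghb b.
Proof.
move=> sb; rewrite mem_filter; apply/andP/idP => [[]//|gb]; split => //.
apply/mapP; exists (rev b); last by rewrite revK.
have := @srch_complete b sb (proj2 (andP gb)) 64 0 erefl.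
by rewrite take0.
Qed.



Definition plof (k : nat) : PL :=
  if k == 3 then @exist _ _ (0%R, 1%R) isT else @exist _ _ (1%R, (k%:R)%R) isT.
Definition plidx (x : PL) : nat :=
  if ((val x).1 == 0%R) then 3 else nat_of_ord (val x).2.

Lemma PL_cases (x : PL) : x = plof 0 \/ x = plof 1 \/ x = plof 2 \/ x = plof 3.
Proof.
case: x => [[[[|[|[|a]]] Ha] [[|[|[|b]]] Hb]] H] //.
all: try by [].
all: first [ by left; apply: val_inj; apply/eqP
           | by right; left; apply: val_inj; apply/eqP
           | by right; right; left; apply: val_inj; apply/eqP
           | by right; right; right; apply: val_inj; apply/eqP ].
Qed.

Lemma plofK x : plof (plidx x) = x.
Proof. by case: (PL_cases x) => [->|[->|[->|->]]]. Qed.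
Lemma plidx_lt x : plidx x < 4.
Proof. by case: (PL_cases x) => [->|[->|[->|->]]]. Qed.
Lemma plidxK k : k < 4 -> plidx (plof k) = k.
Proof. by case: k => [|[|[|[|k]]]]. Qed.
Lemma plidx_inj : injective plidx.
Proof. exact: can_inj plofK. Qed.


Definition o0 : 'I_3 := @Ordinal 3 0 isT.
Definition o1 : 'I_3 := @Ordinal 3 1 isT.
Definition o2 : 'I_3 := @Ordinal 3 2 isT.
Lemma I3_cases (j : 'I_3) : j = o0 \/ j = o1 \/ j = o2.
Proof.
case: j => [[|[|[|j]]] Hj] //.
- by left; apply: val_inj.
- by right; left; apply: val_inj.
- by right; right; apply: val_inj.
Qed.

Definition enc (x : SPoint) : nat := plidx (x o0) * 16 + plidx (x o1) * 4 + plidx (x o2).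
Definition dec (n : nat) : SPoint := [ffun j : 'I_3 => plof (digit n j)].

Lemma digit_lt n j : digit n j < 4.
Proof. rewrite /digit; case: ifP => _; last case: ifP => _; exact: ltn_pmod. Qed.

Lemma digit_enc x (j : 'I_3) : digit (enc x) j = plidx (x j).
Proof.
have := plidx_lt (x o0); have := plidx_lt (x o1); have := plidx_lt (x o2).
rewrite /enc /digit.
case: (I3_cases j) => [->|[->|->]] /=; lia.
Qed.

Lemma enc_lt x : enc x < 64.
Proof.
have := plidx_lt (x o0); have := plidx_lt (x o1); have := plidx_lt (x o2).
rewrite /enc; lia.
Qed.

Lemma encK x : dec (enc x) = x.
Proof. by apply/ffunP => j; rewrite ffunE digit_enc plofK. Qed.

Lemma decK {n} : n < 64 -> enc (dec n) = n.
Proof.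
move=> hn; rewrite /enc !ffunE !plidxK ?digit_lt // /digit /=; lia.
Qed.

Lemma dec_j n (j : 'I_3) : dec n j = plof (digit n j).
Proof. by rewrite ffunE. Qed.

Lemma forall_ord_iota n (P : nat -> bool) :
  [forall j : 'I_n, P j] = all P (iota 0 n).
Proof.
apply/forallP/allP => [h x|h j].
  by rewrite mem_iota add0n => /andP [_ hx]; exact: (h (Ordinal hx)).
by apply: h; rewrite mem_iota add0n /=.
Qed.

Lemma exists_ord_iota n (P : nat -> bool) :
  [exists j : 'I_n, P j] = has P (iota 0 n).
Proof.
apply/existsP/hasP => [[j hj]|[x]].
  by exists (nat_of_ord j) => //; rewrite mem_iota add0n /=.
by rewrite mem_iota add0n => /andP [_ hx] h; exists (Ordinal hx).
Qed.

Lemma line_tab : all (fun m => all (fun n => all (fun i =>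
   (n \in lineidx m i) == all (fun j => (j == i) || (digit n j == digit m j)) (iota 0 3))
   (iota 0 3)) (iota 0 64)) (iota 0 64).
Proof. vm_compute. reflexivity. Qed.

Lemma line_props : all (fun m => all (fun i =>
   uniq (lineidx m i) && all (fun n => n < 64) (lineidx m i)) (iota 0 3)) (iota 0 64).
Proof. vm_compute. reflexivity. Qed.

Lemma in64 {m} : m < 64 -> m \in iota 0 64.
Proof. by rewrite mem_iota. Qed.
Lemma in3 (i : 'I_3) : nat_of_ord i \in iota 0 3.
Proof. by rewrite mem_iota add0n /=. Qed.

Lemma mem_sline p (i : 'I_3) q : (q \in sline p i) = (enc q \in lineidx (enc p) i).
Proof.
have := allP (allP (allP line_tab _ (in64 (enc_lt p))) _ (in64 (enc_lt q))) _ (in3 i).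
move/eqP => ->; rewrite inE -forall_ord_iota.
apply: eq_forallb => j; rewrite !digit_enc (inj_eq (@plidx_inj)) implyNb.
by [].
Qed.

Lemma lineP {m} (i : 'I_3) : m < 64 -> uniq (lineidx m i) /\ all (fun n => n < 64) (lineidx m i).
Proof.
move=> hm; have /andP [] := allP (allP line_props _ (in64 hm)) _ (in3 i); by [].
Qed.

Lemma count_set (L : seq nat) (A : pred SPoint) : uniq L -> all (fun n => n < 64) L ->
  #|[pred x | (enc x \in L) && A x]| = count (fun n => A (dec n)) L.
Proof.
move=> uL aL.
have us : uniq [seq dec n | n <- L & A (dec n)].
  rewrite map_inj_in_uniq ?filter_uniq // => n m.
  rewrite !mem_filter => /andP [_ hn] /andP [_ hm] e.
  by rewrite -(decK (allP aL _ hn)) -(decK (allP aL _ hm)) e.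
rewrite -size_filter -(size_map dec) -(card_uniqP us).
apply: eq_card => x; rewrite inE; apply/andP/mapP => [[xL Ax]|[n]].
  by exists (enc x); rewrite ?encK // mem_filter encK Ax.
rewrite mem_filter => /andP [An nL] ->; rewrite decK //; exact: allP aL _ nL.
Qed.

Definition bits (H : {set SPoint}) : seq bool := [seq dec n \in H | n <- iota 0 64].
Definition mk (b : seq bool) : {set SPoint} := [set x | nth false b (enc x)].

Lemma size_bits H : size (bits H) = 64.
Proof. by rewrite size_map size_iota. Qed.

Lemma nth_bits (H : {set SPoint}) n : n < 64 -> nth false (bits H) n = (dec n \in H).
Proof. by move=> hn; rewrite (nth_map 0) ?size_iota // nth_iota. Qed.

Lemma bitsK H : mk (bits H) = H.
Proof. by apply/setP => x; rewrite inE nth_bits ?enc_lt // encK. Qed.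

Lemma mkK {b} : size b = 64 -> bits (mk b) = b.
Proof.
move=> sb; apply: (@eq_from_nth _ false); first by rewrite size_bits sb.
by move=> n; rewrite size_bits => hn; rewrite nth_bits // inE decK.
Qed.

Lemma count_bits (H : {set SPoint}) L : all (fun n => n < 64) L ->
  count (fun n => dec n \in H) L = count (nth false (bits H)) L.
Proof. by move=> aL; apply: eq_in_count => n /(allP aL) hn; rewrite nth_bits. Qed.

Lemma card_bits (H : {set SPoint}) : #|H| = count id (bits H).
Proof.
rewrite count_map.
rewrite -(@count_set (iota 0 64) (mem H)) ?iota_uniq //.
by apply: eq_card => x; rewrite inE in64 ?enc_lt.
Qed.

Lemma sub_sline (H : {set SPoint}) p (i : 'I_3) :
  (sline p i \subset H) = (count (nth false (bits H)) (lineidx (enc p) i) == 4).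
Proof.
have [uL aL] := lineP i (enc_lt p).
rewrite -count_bits // -(size_lineidx (enc p) i) -all_count.
apply/subsetP/allP => [h n nL|h x].
  by apply: h; rewrite mem_sline decK //; exact: allP aL _ nL.
by rewrite mem_sline => xL; rewrite -(encK x); apply: h.
Qed.

Lemma card_sline (H : {set SPoint}) p (i : 'I_3) :
  #|sline p i :&: H| = count (nth false (bits H)) (lineidx (enc p) i).
Proof.
have [uL aL] := lineP i (enc_lt p).
rewrite -count_bits // -(@count_set _ (mem H)) //.
by apply: eq_card => x; rewrite in_setI mem_sline.
Qed.

Lemma forall_slines (P : {set SPoint} -> bool) :
  [forall l in slines, P l] = [forall p, forall i, P (sline p i)].
Proof.
apply/forall_inP/forallP => [h p|h l /imset2P [p i _ _ ->]].
  by apply/forallP => i; apply: h; apply: imset2_f.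
exact: (forallP (h p) i).
Qed.

Lemma forall_enc (Q : nat -> nat -> bool) :
  [forall p : SPoint, forall i : 'I_3, Q (enc p) i] = all (fun m => all (Q m) (iota 0 3)) (iota 0 64).
Proof.
apply/forallP/allP => [h m|h p].
  rewrite mem_iota add0n => /andP [_ hm].
  by rewrite -forall_ord_iota; have := h (dec m); rewrite decK.
by rewrite forall_ord_iota; apply: h; rewrite in64 ?enc_lt.
Qed.

Lemma setT_bits (H : {set SPoint}) : (H != setT) = ~~ all id (bits H).
Proof.
congr negb; rewrite all_map; apply/eqP/allP => [-> n _|h]; first by rewrite /= in_setT.
by apply/setP => x; rewrite in_setT -(encK x); apply: h; rewrite in64 ?enc_lt.
Qed.

Lemma geomE H : geom_hyperplane H = ghb (bits H).
Proof.
rewrite /geom_hyperplane /ghb setT_bits; congr andb.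
rewrite forall_slines LIall_eq all_allpairs.
rewrite -(forall_enc (fun m i => lineok (bits H) (lineidx m i))).
apply: eq_forallb => p; apply: eq_forallb => i.
by rewrite sub_sline card_sline /lineok.
Qed.

Lemma ovoidE H : ovoid H = ovb (bits H).
Proof.
rewrite /ovoid /ovb geomE; congr andb.
rewrite forall_slines LIall_eq all_allpairs.
rewrite -(forall_enc (fun m i => count (nth false (bits H)) (lineidx m i) != 4)).
apply: eq_forallb => p; apply: eq_forallb => i.
by rewrite sub_sline.
Qed.


Definition singc (m : nat) : seq bool :=
  [seq has (fun j => digit n j == digit m j) (iota 0 3) | n <- iota 0 64].

Lemma bits_sing p : bits (singular_hyp p) = singc (enc p).
Proof.
apply: (@eq_from_nth _ false); first by rewrite size_bits size_map size_iota.
move=> n; rewrite size_bits => hn.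
rewrite nth_bits // (nth_map 0) ?size_iota // nth_iota // add0n inE -exists_ord_iota.
apply: eq_existsb => j.
by rewrite -(inj_eq (@plidx_inj)) dec_j plidxK ?digit_lt // digit_enc.
Qed.

Definition tbit (t j : nat) : nat :=
  if j == 0 then t %/ 4 %% 2 else if j == 1 then t %/ 2 %% 2 else t %% 2.
Definition repn (d k : nat) : nat :=
  if d == 3 then (if k == 0 then 0 else 1) else (if k == 0 then 1 else d).
Definition monn (n t : nat) : nat :=
  repn (digit n 0) (tbit t 0) * repn (digit n 1) (tbit t 1) * repn (digit n 2) (tbit t 2).
Definition MT : seq (seq nat) :=
  [:: [:: 1; 0; 0; 0; 0; 0; 0; 0]; [:: 1; 1; 0; 0; 0; 0; 0; 0]; [:: 1; 2; 0; 0; 0; 0; 0; 0]; [:: 0; 1; 0; 0; 0; 0; 0; 0]; [:: 1; 0; 1; 0; 0; 0; 0; 0]; [:: 1; 1; 1; 1; 0; 0; 0; 0]; [:: 1; 2; 1; 2; 0; 0; 0; 0]; [:: 0; 1; 0; 1; 0; 0; 0; 0]; [:: 1; 0; 2; 0; 0; 0; 0; 0]; [:: 1; 1; 2; 2; 0; 0; 0; 0]; [:: 1; 2; 2; 4; 0; 0; 0; 0]; [:: 0; 1; 0; 2; 0; 0; 0; 0]; [:: 0; 0; 1; 0; 0; 0; 0; 0]; [:: 0; 0; 1; 1; 0; 0; 0; 0]; [:: 0; 0; 1; 2; 0; 0; 0; 0]; [:: 0; 0; 0; 1; 0; 0; 0; 0]; [:: 1; 0; 0; 0; 1; 0; 0;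 0]; [:: 1; 1; 0; 0; 1; 1; 0; 0]; [:: 1; 2; 0; 0; 1; 2; 0; 0]; [:: 0; 1; 0; 0; 0; 1; 0; 0]; [:: 1; 0; 1; 0; 1; 0; 1; 0]; [:: 1; 1; 1; 1; 1; 1; 1; 1]; [:: 1; 2; 1; 2; 1; 2; 1; 2]; [:: 0; 1; 0; 1; 0; 1; 0; 1]; [:: 1; 0; 2; 0; 1; 0; 2; 0]; [:: 1; 1; 2; 2; 1; 1; 2; 2]; [:: 1; 2; 2; 4; 1; 2; 2; 4]; [:: 0; 1; 0; 2; 0; 1; 0; 2]; [:: 0; 0; 1; 0; 0; 0; 1; 0]; [:: 0; 0; 1; 1; 0; 0; 1; 1]; [:: 0; 0; 1; 2; 0; 0; 1; 2]; [:: 0; 0; 0; 1; 0; 0; 0; 1]; [:: 1; 0; 0; 0; 2; 0; 0; 0]; [:: 1; 1; 0; 0; 2; 2; 0; 0]; [:: 1; 2; 0; 0; 2; 4; 0; 0]; [:: 0; 1; 0; 0; 0; 2; 0; 0]; [:: 1; 0; 1; 0; 2; 0; 2; 0]; [:: 1; 1; 1; 1; 2; 2; 2; 2]; [:: 1; 2; 1; 2; 2; 4; 2; 4]; [:: 0; 1; 0; 1; 0; 2; 0; 2]; [:: 1; 0; 2; 0; 2; 0; 4; 0]; [:: 1; 1; 2; 2; 2; 2; 4; 4]; [:: 1; 2; 2; 4; 2; 4; 4; 8]; [:: 0; 1; 0; 2; 0; 2; 0; 4]; [:: 0; 0; 1; 0; 0; 0; 2; 0]; [:: 0; 0; 1;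 1; 0; 0; 2; 2]; [:: 0; 0; 1; 2; 0; 0; 2; 4]; [:: 0; 0; 0; 1; 0; 0; 0; 2]; [:: 0; 0; 0; 0; 1; 0; 0; 0]; [:: 0; 0; 0; 0; 1; 1; 0; 0]; [:: 0; 0; 0; 0; 1; 2; 0; 0]; [:: 0; 0; 0; 0; 0; 1; 0; 0]; [:: 0; 0; 0; 0; 1; 0; 1; 0]; [:: 0; 0; 0; 0; 1; 1; 1; 1]; [:: 0; 0; 0; 0; 1; 2; 1; 2]; [:: 0; 0; 0; 0; 0; 1; 0; 1]; [:: 0; 0; 0; 0; 1; 0; 2; 0]; [:: 0; 0; 0; 0; 1; 1; 2; 2]; [:: 0; 0; 0; 0; 1; 2; 2; 4]; [:: 0; 0; 0; 0; 0; 1; 0; 2]; [:: 0; 0; 0; 0; 0; 0; 1; 0]; [:: 0; 0; 0; 0; 0; 0; 1; 1]; [:: 0; 0; 0; 0; 0; 0; 1; 2]; [:: 0; 0; 0; 0; 0; 0; 0; 1]].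
Lemma MT_eq : MT = [seq [seq monn n t | t <- iota 0 8] | n <- iota 0 64].
Proof. vm_compute. reflexivity. Qed.
Fixpoint dot (a b : seq nat) : nat :=
  match a, b with x :: a', y :: b' => x * y + dot a' b' | _, _ => 0 end.
Definition zb (cs : seq nat) : seq bool := [seq dot cs row %% 3 == 0 | row <- MT].
Fixpoint allseqs (k : nat) : seq (seq nat) :=
  if k is k'.+1 then [seq x :: s | x <- [:: 0; 1; 2], s <- allseqs k'] else [:: [::]].
Notation ZL := [seq zb cs | cs <- allseqs 8 & cs != nseq 8 0].

Definition tof (t : nat) : TIdx := [ffun j : 'I_3 => inord (tbit t j)].
Definition tidx (e : TIdx) : nat := e o0 * 4 + e o1 * 2 + e o2.

Lemma tbit_lt t j : tbit t j < 2.
Proof. rewrite /tbit; case: ifP => _; last case: ifP => _; exact: ltn_pmod. Qed.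

Lemma tidx_lt e : tidx e < 8.
Proof.
have := ltn_ord (e o0); have := ltn_ord (e o1); have := ltn_ord (e o2).
rewrite /tidx; lia.
Qed.

Lemma tofK e : tof (tidx e) = e.
Proof.
have := ltn_ord (e o0); have := ltn_ord (e o1); have := ltn_ord (e o2).
move=> h2 h1 h0.
apply/ffunP => j; rewrite ffunE; apply: val_inj; rewrite /= inordK ?tbit_lt //.
rewrite /tbit /tidx; case: (I3_cases j) => [->|[->|->]] /=; lia.
Qed.

Lemma tidxK t : t < 8 -> tidx (tof t) = t.
Proof.
move=> ht; rewrite /tidx !ffunE !inordK ?tbit_lt // /tbit /=; lia.
Qed.

Lemma val_tof t (j : 'I_3) : nat_of_ord (tof t j) = tbit t j.
Proof. by rewrite ffunE inordK ?tbit_lt. Qed.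

Definition cvec (c : {ffun TIdx -> F3}) : seq nat := [seq nat_of_ord (c (tof t)) | t <- iota 0 8].
Definition cof (cs : seq nat) : {ffun TIdx -> F3} := [ffun e => ((nth 0 cs (tidx e))%:R)%R].

Lemma val_F3 n : nat_of_ord ((n%:R)%R : F3) = n %% 3.
Proof. exact: (@val_Fp_nat 3 isT n). Qed.

Lemma F3_natr (a : F3) : a = ((nat_of_ord a)%:R)%R.
Proof.
apply: val_inj; rewrite /= val_F3 modn_small //; exact: (ltn_ord a).
Qed.

Lemma rep_plof d (k : 'I_2) : d < 4 -> rep (plof d) k = ((repn d k)%:R)%R.
Proof.
case: k => [[|[|k]] hk] //; case: d => [|[|[|[|d]]]] // _.
all: try by apply: val_inj.
Qed.

Lemma prod_rep (x : SPoint) (t : 'I_8) :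
  (\prod_(j < 3) rep (x j) (tof t j) = ((monn (enc x) t)%:R))%R.
Proof.
have hx j : x j = plof (digit (enc x) j) by rewrite -dec_j encK.
rewrite (eq_bigr (fun j : 'I_3 => ((repn (digit (enc x) j) (tbit t j))%:R)%R)); last first.
  by move=> j _; rewrite hx rep_plof ?digit_lt // val_tof.
rewrite -natr_prod; congr (_%:R)%R.
by rewrite !big_ord_recl big_ord0 /monn muln1 mulnA.
Qed.

Lemma dot_map cs f : dot cs [seq f t | t <- iota 0 (size cs)] = \sum_(t < size cs) nth 0 cs t * f t.
Proof.
elim: cs f => [|a cs IH] f /=; first by rewrite big_ord0.
rewrite big_ord_recl /=; congr (_ + _).
rewrite -(IH (fun t => f t.+1)); congr dot.
by rewrite -[1]/(1 + 0) iotaDl -map_comp.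
Qed.

Lemma size_cvec c : size (cvec c) = 8.
Proof. by rewrite size_map size_iota. Qed.

Lemma segre_dot c x : segre_eval c x = ((dot (cvec c) (nth [::] MT (enc x)))%:R)%R.
Proof.
have E : dot (cvec c) (nth [::] MT (enc x)) = \sum_(t < 8) nth 0 (cvec c) t * monn (enc x) t.
  rewrite MT_eq (nth_map 0) ?size_iota ?enc_lt // nth_iota ?enc_lt // add0n.
  by have := dot_map (cvec c) (monn (enc x)); rewrite size_cvec.
rewrite E natr_sum.
rewrite /segre_eval (reindex (fun t : 'I_8 => tof t)); last first.
  exists (fun e => Ordinal (tidx_lt e)) => [t _|e _]; last exact: tofK.
  by apply: val_inj; rewrite /= tidxK.
apply: eq_bigr => t _.
rewrite prod_rep natrM (nth_map 0) ?size_iota // nth_iota // add0n.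
by rewrite -F3_natr.
Qed.

Lemma zero_iff (N : nat) : (((N%:R)%R : F3) == 0%R) = (N %% 3 == 0).
Proof.
apply/eqP/eqP => [h|h]; first by rewrite -val_F3 h.
by apply: val_inj; rewrite /= val_F3 h.
Qed.

Lemma size_MT : size MT = 64.
Proof. by rewrite MT_eq size_map size_iota. Qed.

Lemma bits_Z c : bits [set x | segre_eval c x == 0%R] = zb (cvec c).
Proof.
apply: (@eq_from_nth _ false); first by rewrite size_bits size_map size_MT.
move=> n; rewrite size_bits => hn.
rewrite nth_bits // inE segre_dot zero_iff decK // (nth_map [::]) ?size_MT //.
Qed.

Lemma mem_allseqs k cs : (cs \in allseqs k) = (size cs == k) && all (fun v => v < 3) cs.
Proof.
elim: k cs => [|k IH] [|v cs] //.
  apply/negbTE/negP => /allpairsP [[x s] [_ _ //]].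
apply/idP/idP.
  move/allpairsP => [[x s] []]; rewrite /= => hx hs [e1 e2]; subst x s.
  move: hs; rewrite IH => /andP [/eqP -> ->]; rewrite eqxx andbT.
  by move: hx; rewrite !inE => /or3P [] /eqP ->.
move=> /= /andP [hs /andP [hv ha]].
have hc : cs \in allseqs k by rewrite IH -eqSS hs ha.
case: v hv {ha} => [|[|[|v]]] // _; rewrite !mem_cat.
- by rewrite (map_f _ hc).
- by rewrite (map_f _ hc) orbT.
- by rewrite (map_f _ hc) !orbT.
Qed.

Lemma cvec_lt c : all (fun v => v < 3) (cvec c).
Proof. by apply/allP => v /mapP [t _ ->]; exact: (ltn_ord (c (tof t))). Qed.

Lemma cvec_cof cs : size cs = 8 -> all (fun v => v < 3) cs -> cvec (cof cs) = cs.
Proof.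
move=> sc ac; apply: (@eq_from_nth _ 0); first by rewrite size_cvec sc.
move=> t; rewrite size_cvec => ht.
rewrite (nth_map 0) ?size_iota // nth_iota // add0n ffunE tidxK // val_F3 modn_small //.
by apply: (allP ac); rewrite mem_nth // sc.
Qed.

Lemma cvec_eq0 c : (cvec c == nseq 8 0) = (c == 0%R).
Proof.
apply/eqP/eqP => [h|->].
  apply/ffunP => e; rewrite -(tofK e) ffunE.
  have := congr1 (fun s => nth 0 s (tidx e)) h.
  rewrite (nth_map 0) ?size_iota ?tidx_lt // nth_iota ?tidx_lt // add0n nth_nseq tidx_lt.
  by move=> h0; apply: val_inj.
by apply: (@eq_from_nth _ 0); rewrite size_cvec // => t ht; rewrite (nth_map 0) ?size_iota // ffunE nth_nseq ht.
Qed.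

Lemma projE b : size b = 64 -> projective (mk b) = (b \in ZL).
Proof.
move=> sb; apply/existsP/mapP => [[c /andP [c0 /eqP hZ]]|[cs]].
  exists (cvec c); last by rewrite -bits_Z -hZ mkK.
  by rewrite mem_filter cvec_eq0 c0 mem_allseqs size_cvec cvec_lt.
rewrite mem_filter mem_allseqs => /andP [cs0 /andP [/eqP sc ac]] ->.
exists (cof cs); apply/andP; split.
  by rewrite -cvec_eq0 (@cvec_cof cs sc ac).
by rewrite -{1}(@cvec_cof cs sc ac) -bits_Z bitsK.
Qed.


Inductive trie := TNil | TNode of bool & trie & trie.
Fixpoint lookup (t : trie) (ys : seq bool) : bool :=
  match t with
  | TNil => false
  | TNode h t0 t1 => match ys with [::] => h | y :: ys' => lookup (if y then t1 else t0) ys' end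
  end.
Definition thd t := if t is TNode h _ _ then h else false.
Definition tl0 t := if t is TNode _ t0 _ then t0 else TNil.
Definition tl1 t := if t is TNode _ _ t1 then t1 else TNil.
Fixpoint insert (t : trie) (xs : seq bool) : trie :=
  match xs with
  | [::] => TNode true (tl0 t) (tl1 t)
  | x :: xs' => if x then TNode (thd t) (tl0 t) (insert (tl1 t) xs')
                else TNode (thd t) (insert (tl0 t) xs') (tl1 t)
  end.
Lemma lookup_insert t xs ys : lookup (insert t xs) ys = (xs == ys) || lookup t ys.
Proof.
elim: xs t ys => [|x xs IH] t [|y ys] //=.
all: case: t => [|h t0 t1]; try case: x; try case: y; rewrite /= ?IH //.
Qed.
Definition build (L : seq (seq bool)) : trie := foldr (fun x t => insert t x) TNil L.
Lemma lookup_build L y : lookup (build L) y = (y \in L).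
Proof. elim: L => [|x L IH] //=; by rewrite lookup_insert IH in_cons eq_sym. Qed.

Notation ZT := (build ZL).
Notation SINGS := [seq singc m | m <- iota 0 64].

Definition facts (S : seq (seq bool)) (Z : trie) (SG : seq (seq bool)) : bool :=
  [&& size S == 3424,
      count (lookup Z) S == 3280,
      count (fun b => ~~ lookup Z b) S == 144,
      all (fun b => lookup Z b || (count id b == 16)) S,
      count (fun b => count id b == 37) S == 64,
      count (fun b => count id b == 28) S == 288,
      count (fun b => count id b == 22) S == 1728,
      count (fun b => count id b == 19) S == 768,
      count (fun b => count id b == 16) S == 576,
      all (fun b => (count id b == 37) ==> (b \in SG)) S,
      all (fun b => (count id b == 16) == ovb b) S &
      count (fun b => (count id b == 16) && lookup Z b) S == 432].

Lemma factsE S Z SG : facts S Z SG = [&& size S == 3424,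
      count (lookup Z) S == 3280,
      count (fun b => ~~ lookup Z b) S == 144,
      all (fun b => lookup Z b || (count id b == 16)) S,
      count (fun b => count id b == 37) S == 64,
      count (fun b => count id b == 28) S == 288,
      count (fun b => count id b == 22) S == 1728,
      count (fun b => count id b == 19) S == 768,
      count (fun b => count id b == 16) S == 576,
      all (fun b => (count id b == 37) ==> (b \in SG)) S,
      all (fun b => (count id b == 16) == ovb b) S &
      count (fun b => (count id b == 16) && lookup Z b) S == 432].
Proof. reflexivity. Qed.

Lemma AF : facts SEARCH ZT SINGS.
Proof. vm_compute. reflexivity. Qed.

Lemma F10b : all (fun m => ghb (singc m) && (count id (singc m) == 37)) (iota 0 64).
Proof. vm_compute. reflexivity. Qed.

Lemma F11 : all (fun b => (count id b == 16) == ovb b) SEARCH.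
Proof. move: AF; rewrite factsE => /and5P [h1 h2 h3 h4 /and5P [h5 h6 h7 h8 /and4P [h9 h10 h11 h12]]]. exact: h11. Qed.
Lemma F1 : size SEARCH = 3424.
Proof. move: AF; rewrite factsE => /and5P [h1 h2 h3 h4 /and5P [h5 h6 h7 h8 /and4P [h9 h10 h11 h12]]]. exact: (eqP h1). Qed.
Lemma F2 : count (lookup ZT) SEARCH = 3280.
Proof. move: AF; rewrite factsE => /and5P [h1 h2 h3 h4 /and5P [h5 h6 h7 h8 /and4P [h9 h10 h11 h12]]]. exact: (eqP h2). Qed.
Lemma F3 : count (fun b => ~~ lookup ZT b) SEARCH = 144.
Proof. move: AF; rewrite factsE => /and5P [h1 h2 h3 h4 /and5P [h5 h6 h7 h8 /and4P [h9 h10 h11 h12]]]. exact: (eqP h3). Qed.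
Lemma F5 : count (fun b => count id b == 37) SEARCH = 64.
Proof. move: AF; rewrite factsE => /and5P [h1 h2 h3 h4 /and5P [h5 h6 h7 h8 /and4P [h9 h10 h11 h12]]]. exact: (eqP h5). Qed.
Lemma F6 : count (fun b => count id b == 28) SEARCH = 288.
Proof. move: AF; rewrite factsE => /and5P [h1 h2 h3 h4 /and5P [h5 h6 h7 h8 /and4P [h9 h10 h11 h12]]]. exact: (eqP h6). Qed.
Lemma F7 : count (fun b => count id b == 22) SEARCH = 1728.
Proof. move: AF; rewrite factsE => /and5P [h1 h2 h3 h4 /and5P [h5 h6 h7 h8 /and4P [h9 h10 h11 h12]]]. exact: (eqP h7). Qed.
Lemma F8 : count (fun b => count id b == 19) SEARCH = 768.
Proof. move: AF; rewrite factsE => /and5P [h1 h2 h3 h4 /and5P [h5 h6 h7 h8 /and4P [h9 h10 h11 h12]]]. exact: (eqP h8). Qed.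
Lemma F9 : count (fun b => count id b == 16) SEARCH = 576.
Proof. move: AF; rewrite factsE => /and5P [h1 h2 h3 h4 /and5P [h5 h6 h7 h8 /and4P [h9 h10 h11 h12]]]. exact: (eqP h9). Qed.
Lemma F10 : all (fun b => (count id b == 37) ==> (b \in SINGS)) SEARCH.
Proof. move: AF; rewrite factsE => /and5P [h1 h2 h3 h4 /and5P [h5 h6 h7 h8 /and4P [h9 h10 h11 h12]]]. exact: h10. Qed.
Lemma F4' : all (fun b => lookup ZT b || (count id b == 16)) SEARCH.
Proof. move: AF; rewrite factsE => /and5P [h1 h2 h3 h4 /and5P [h5 h6 h7 h8 /and4P [h9 h10 h11 h12]]]. exact: h4. Qed.
Lemma F12' : count (fun b => (count id b == 16) && lookup ZT b) SEARCH = 432.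
Proof. move: AF; rewrite factsE => /and5P [h1 h2 h3 h4 /and5P [h5 h6 h7 h8 /and4P [h9 h10 h11 h12]]]. exact: (eqP h12). Qed.

Lemma ovS b : b \in SEARCH -> ovb b = (count id b == 16).
Proof. by move=> hb; have := allP F11 _ hb => /eqP. Qed.

Lemma F4 : all (fun b => lookup ZT b || ovb b) SEARCH.
Proof.
apply/allP => b hb; rewrite ovS //; exact: (allP F4').
Qed.
Lemma F12 : count (fun b => ovb b && lookup ZT b) SEARCH = 432.
Proof.
rewrite -F12'; apply: eq_in_count => b hb; cbv beta; by rewrite ovS.
Qed.

Lemma szS {b} : b \in SEARCH -> size b = 64.
Proof. by move=> h; apply/eqP; exact: (allP SEARCH_size). Qed.

Lemma in_ghyps H : (H \in ghyps) = (bits H \in SEARCH).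
Proof. by rewrite inE geomE inSEARCH ?size_bits. Qed.

Lemma card_seq_eq (T : finType) (A : {set T}) (s : seq T) : uniq s -> A =i s -> #|A| = size s.
Proof. by move=> us E; rewrite (eq_card E); apply/card_uniqP. Qed.

Lemma card_P (P : {set SPoint} -> bool) :
  #|[set H in ghyps | P H]| = count (fun b => P (mk b)) SEARCH.
Proof.
have mkinj : {in SEARCH &, injective mk}.
  move=> b1 b2 h1 h2 e; rewrite -(mkK (szS h1)) e; exact: mkK (szS h2).
have us : uniq [seq mk b | b <- SEARCH & P (mk b)].
  rewrite map_inj_in_uniq; first exact: (filter_uniq _ SEARCH_uniq).
  move=> b1 b2; rewrite !(mem_filter (fun b => P (mk b))) => /andP [_ h1] /andP [_ h2]; exact: (mkinj b1 b2 h1 h2).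
have E : [set H in ghyps | P H] =i [seq mk b | b <- SEARCH & P (mk b)].
  move=> H; rewrite in_set; apply/andP/mapP => [[hg hp]|[b]].
    exists (bits H); last by rewrite bitsK.
    by rewrite (mem_filter (fun b => P (mk b))) bitsK hp -in_ghyps hg.
  rewrite (mem_filter (fun b => P (mk b))) => /andP [hp hb] ->; split; last exact: hp.
  by rewrite in_ghyps (mkK (szS hb)).
rewrite (@card_seq_eq _ _ _ us E) size_map size_filter.
reflexivity.
Qed.

Lemma projS b : b \in SEARCH -> projective (mk b) = lookup ZT b.
Proof. by move=> hb; rewrite projE ?szS // lookup_build. Qed.

Lemma cardS b : b \in SEARCH -> #|mk b| = count id b.
Proof. by move=> hb; rewrite card_bits mkK ?szS. Qed.

Lemma size_singc m : size (singc m) = 64.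
Proof. by rewrite size_map size_iota. Qed.

Theorem mainTheorem3 :
  (#|ghyps| = 3424
  /\ #|[set H in ghyps | projective H]| = 3280
  /\ #|[set H in ghyps | ~~ projective H]| = 144
  /\ (forall H, H \in ghyps -> ~~ projective H -> ovoid H)
  /\ #|[set H in ghyps | #|H| == 37]| = 64
  /\ #|[set H in ghyps | #|H| == 28]| = 288
  /\ #|[set H in ghyps | #|H| == 22]| = 1728
  /\ #|[set H in ghyps | #|H| == 19]| = 768
  /\ #|[set H in ghyps | #|H| == 16]| = 576
  /\ [set H in ghyps | #|H| == 37] = [set singular_hyp p | p : SPoint]
  /\ [set H in ghyps | #|H| == 16] = [set H | ovoid H]
  /\ #|[set H | ovoid H & projective H]| = 432)%N.
Proof.
split.
  have -> : ghyps = [set H in ghyps | true] by apply/setP => H; rewrite !inE andbT.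
  by rewrite card_P count_predT F1.
split.
  rewrite card_P; apply: (etrans _ F2); apply: eq_in_count => b hb; cbv beta; by rewrite projS.
split.
  rewrite card_P; apply: (etrans _ F3); apply: eq_in_count => b hb; cbv beta; by rewrite projS.
split.
  move=> H hg hp; rewrite ovoidE; have hb : bits H \in SEARCH by rewrite -in_ghyps.
  have := allP F4 _ hb; rewrite -projS // bitsK.
  by rewrite (negbTE hp).
split.
  rewrite card_P; apply: (etrans _ F5); apply: eq_in_count => b hb; cbv beta; by rewrite cardS.
split.
  rewrite card_P; apply: (etrans _ F6); apply: eq_in_count => b hb; cbv beta; by rewrite cardS.
split.
  rewrite card_P; apply: (etrans _ F7); apply: eq_in_count => b hb; cbv beta; by rewrite cardS.
split.
  rewrite card_P; apply: (etrans _ F8); apply: eq_in_count => b hb; cbv beta; by rewrite cardS.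
split.
  rewrite card_P; apply: (etrans _ F9); apply: eq_in_count => b hb; cbv beta; by rewrite cardS.
split.
  apply/setP => H; rewrite inE; apply/andP/imsetP => [[hg h37]|[p _ ->]].
    have hb : bits H \in SEARCH by rewrite -in_ghyps.
    have := allP F10 _ hb; rewrite -card_bits h37 implyTb => /mapP [m hm e].
    have hm' : m < 64 by move: hm; rewrite mem_iota.
    exists (dec m) => //.
    by rewrite -(bitsK H) e -(bitsK (singular_hyp (dec m))) bits_sing decK.
  have /andP [g1 g2] := allP F10b _ (in64 (enc_lt p)).
  split.
    by rewrite in_ghyps bits_sing inSEARCH ?size_singc.
  by rewrite card_bits bits_sing.
split.
  apply/setP => H; rewrite !inE geomE ovoidE card_bits.
  case hb: (bits H \in SEARCH).
    have := allP F11 _ hb => /eqP <-.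
    by rewrite -inSEARCH ?size_bits // hb.
  by rewrite /ovb -inSEARCH ?size_bits // hb.
have -> : [set H | ovoid H & projective H] = [set H in ghyps | ovoid H && projective H].
  apply/setP => H; rewrite !inE; case ho: (ovoid H); last by rewrite andbF.
  by move: ho; rewrite /ovoid => /andP [-> _].
rewrite card_P; apply: (etrans _ F12); apply: eq_in_count => b hb.
cbv beta; by rewrite ovoidE (mkK (szS hb)) projS.
Qed.
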